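(* Let $f=\frac1n\sum_{i=1}^n f_i$ where each $f_i:\mathbb{R}^d\to\mathbb{R}$ is $L$-smooth, and assume moreover that either each $f_i$ is $\mu$-strongly convex for some $\mu>0$, or $\inf_x f(x)>-\infty$. Let the stepsize satisfy $\gamma\le\frac1{L(n+1)}$. Then the iterates of No Full Grad SARAH (described in the context) satisfy, for every epoch $s$, $$f(x_{s+1}^0)\le f(x_s^0)-\frac{\gamma(n+1)}{2}\|\nabla f(x_s^0)\|^2+\frac{\gamma(n+1)}{2}\Big\|\nabla f(x_s^0)-\frac1{n+1}\sum_{t=0}^{n}v_s^t\Big\|^2.$$
   Context: No Full Grad SARAH: input $x_0^0\in\mathbb{R}^d$, $v_0=0$, stepsize $\gamma>0$. For epochs $s=0,1,\dots$: choose a permutation $\pi_s^1,\dots,\pi_s^n$ of $\{1,\dots,n\}$ (by any shuffling rule); set $\tilde v_s^1=0$, $v_s^0=v_s$, $x_s^1=x_s^0-\gamma v_s^0$; for $t=1,\dots,n$ set $\tilde v_s^{t+1}=\frac{t-1}{t}\tilde v_s^t+\frac1t\nabla f_{\pi_s^t}(x_s^t)$, $v_s^t=\frac1n\big(\nabla f_{\pi_s^t}(x_s^t)-\nabla f_{\pi_s^t}(x_s^{t-1})\big)+v_s^{t-1}$, $x_s^{t+1}=x_s^t-\gamma v_s^t$; then $x_{s+1}^0=x_s^{n+1}$, $v_{s+1}=\tilde v_s^{n+1}$. *)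

(* Defs.v *)
From HB Require Import structures.
From mathcomp Require Import all_boot all_order all_algebra all_fingroup.
From mathcomp Require Import all_classical all_reals all_analysis.
Set Implicit Arguments. Unset Strict Implicit. Unset Printing Implicit Defensive.
Import Order.TTheory GRing.Theory Num.Theory.
Import numFieldNormedType.Exports.
Local Open Scope ring_scope.

Section NFGS.
Context {R : realType} {d : nat}.
Local Notation vec := 'rV[R]_d.

Definition dotv (u v : vec) : R := (u *m v^T) 0 0.
Definition norm2 (u : vec) : R := Num.sqrt (dotv u u).

Definition grad (f : vec -> R) (x : vec) : vec :=
  \row_j ('d f x (delta_mx 0 j : vec)).

Definition L_smooth (L : R) (f : vec -> R) : Prop :=
  (forall x, differentiable f x) /\
  (forall x y, norm2 (grad f x - grad f y) <= L * norm2 (x - y)).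

Definition strongly_convex (mu : R) (f : vec -> R) : Prop :=
  forall x y, f x + dotv (grad f x) (y - x) + mu / 2 * norm2 (y - x) ^+ 2 <= f y.

Definition avgf (n : nat) (fs : 'I_n -> vec -> R) (x : vec) : R :=
  n%:R^-1 * \sum_(i < n) fs i x.

(* gradient of f_{pi^{t'+1}} at x, where the permutation is applied to
   the 0-based position t' (t' < n in all uses). *)
Definition grad_pos (n : nat) (fs : 'I_n -> vec -> R) (p : {perm 'I_n})
    (t' : nat) (x : vec) : vec :=
  match (insub t' : option 'I_n) with
  | Some i => grad (fs (p i)) x
  | None => 0
  end.

(* Inner loop of one epoch, started from x_s^0 = x0 and v_s = vs.
   inner t = (x_s^t, x_s^{t+1}, v_s^t, tilde v_s^{t+1})  for 0 <= t <= n. *)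
Fixpoint inner (n : nat) (fs : 'I_n -> vec -> R) (gamma : R)
    (p : {perm 'I_n}) (x0 vs : vec) (t : nat) : vec * vec * vec * vec :=
  match t with
  | 0 => (x0, x0 - gamma *: vs, vs, 0)
  | t'.+1 =>
      let '(xp, xc, v, tv) := inner fs gamma p x0 vs t' in
      (* current index t = t'.+1 ; xp = x^{t-1}, xc = x^t, v = v^{t-1}, tv = tilde v^t *)
      let tv' := ((t'%:R) / (t'.+1)%:R) *: tv
                 + (t'.+1)%:R^-1 *: grad_pos fs p t' xc in
      let v' := n%:R^-1 *: (grad_pos fs p t' xc - grad_pos fs p t' xp) + v in
      (xc, xc - gamma *: v', v', tv')
  end.

Definition inner_x (n : nat) fs gamma p x0 vs t : vec :=
  (@inner n fs gamma p x0 vs t).1.1.1.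
Definition inner_v (n : nat) fs gamma p x0 vs t : vec :=
  (@inner n fs gamma p x0 vs t).1.2.

(* Outer loop: outer s = (x_s^0, v_s), with v_0 = 0,
   x_{s+1}^0 = x_s^{n+1}, v_{s+1} = tilde v_s^{n+1}. *)
Fixpoint outer (n : nat) (fs : 'I_n -> vec -> R) (gamma : R)
    (pi : nat -> {perm 'I_n}) (x00 : vec) (s : nat) : vec * vec :=
  match s with
  | 0 => (x00, 0)
  | s'.+1 =>
      let '(x, vs) := outer fs gamma pi x00 s' in
      let '(_, xn1, _, tvn1) := inner fs gamma (pi s') x vs n in
      (xn1, tvn1)
  end.

Definition nfg_x0 (n : nat) fs gamma pi x00 s : vec :=
  (@outer n fs gamma pi x00 s).1.
Definition nfg_v (n : nat) fs gamma pi x00 s t : vec :=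
  let '(x, vs) := @outer n fs gamma pi x00 s in inner_v fs gamma (pi s) x vs t.

End NFGS.

(* Main.v *)
Require Import Defs.
From HB Require Import structures.
From mathcomp Require Import all_boot all_order all_algebra all_fingroup.
From mathcomp Require Import all_classical all_reals all_analysis.
Set Implicit Arguments. Unset Strict Implicit. Unset Printing Implicit Defensive.
Import Order.TTheory GRing.Theory Num.Theory.
Import numFieldNormedType.Exports.
Local Open Scope classical_set_scope.
Local Open Scope ring_scope.
From mathcomp Require Import ring lra.

Section S.
Context {R : realType} {d : nat}.
Local Notation vec := 'rV[R]_d.

Lemma dotvE (u v : vec) : dotv u v = \sum_j u 0 j * v 0 j.
Proof. by rewrite /dotv !mxE; apply: eq_bigr => j _; rewrite mxE. Qed.

Lemma dotvC (u v : vec) : dotv u v = dotv v u.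
Proof. by rewrite !dotvE; apply: eq_bigr => j _; rewrite mulrC. Qed.

Lemma dotvDl (u v w : vec) : dotv (u + v) w = dotv u w + dotv v w.
Proof. by rewrite !dotvE -big_split; apply: eq_bigr => j _; rewrite mxE mulrDl. Qed.

Lemma dotvZl (k : R) (u w : vec) : dotv (k *: u) w = k * dotv u w.
Proof. by rewrite !dotvE mulr_sumr; apply: eq_bigr => j _; rewrite mxE mulrA. Qed.

Lemma dotvNl (u w : vec) : dotv (- u) w = - dotv u w.
Proof. by rewrite -scaleN1r dotvZl mulN1r. Qed.

Lemma dotvBl (u v w : vec) : dotv (u - v) w = dotv u w - dotv v w.
Proof. by rewrite dotvDl dotvNl. Qed.

Lemma dotvDr (u v w : vec) : dotv w (u + v) = dotv w u + dotv w v.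
Proof. by rewrite !(dotvC w) dotvDl. Qed.
Lemma dotvZr (k : R) (u w : vec) : dotv w (k *: u) = k * dotv w u.
Proof. by rewrite !(dotvC w) dotvZl. Qed.
Lemma dotvBr (u v w : vec) : dotv w (u - v) = dotv w u - dotv w v.
Proof. by rewrite !(dotvC w) dotvBl. Qed.

Lemma dotv_ge0 (u : vec) : 0 <= dotv u u.
Proof. by rewrite dotvE sumr_ge0 // => j _; rewrite -expr2 sqr_ge0. Qed.

Lemma dotv0l (w : vec) : dotv 0 w = 0.
Proof. by rewrite dotvE big1 // => j _; rewrite mxE mul0r. Qed.

Lemma dotv_suml I (r : seq I) (P : pred I) (F : I -> vec) w :
  dotv (\sum_(i <- r | P i) F i) w = \sum_(i <- r | P i) dotv (F i) w.
Proof.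
elim/big_rec2: _ => [|i y1 y2 _ <-]; first by rewrite dotv0l.
by rewrite dotvDl.
Qed.

Lemma norm2_sq (u : vec) : norm2 u ^+ 2 = dotv u u.
Proof. by rewrite /norm2 sqr_sqrtr // dotv_ge0. Qed.

Lemma norm2_ge0 (u : vec) : 0 <= norm2 u.
Proof. exact: sqrtr_ge0. Qed.

Lemma norm2Z (k : R) (u : vec) : norm2 (k *: u) = `|k| * norm2 u.
Proof.
by rewrite /norm2 dotvZl dotvZr mulrA -expr2 sqrtrM ?sqr_ge0 // sqrtr_sqr.
Qed.

Lemma dotv_eq0 (w : vec) : dotv w w = 0 -> w = 0.
Proof.
rewrite dotvE => /eqP; rewrite psumr_eq0; last by move=> j _; rewrite -expr2 sqr_ge0.
move=> /allP H; apply/rowP => j; rewrite mxE.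
by have := H j (mem_index_enum j); rewrite -expr2 sqrf_eq0 => /eqP.
Qed.

Lemma CS (u w : vec) : dotv u w <= norm2 u * norm2 w.
Proof.
have key : dotv u w ^+ 2 <= dotv u u * dotv w w.
  have [C0|Cpos] := eqVneq (dotv w w) 0.
    by move/dotv_eq0: C0 => ->; rewrite dotvC !dotv0l expr0n mulr0.
  have Cgt : 0 < dotv w w by rewrite lt0r Cpos dotv_ge0.
  have lC : dotv u w / dotv w w * dotv w w = dotv u w by rewrite divfK.
  move: lC; set l := dotv u w / dotv w w => lC.
  have := dotv_ge0 (u - l *: w).
  rewrite !dotvBl !dotvBr !dotvZl !dotvZr (dotvC w u) => H.
  clearbody l.
  move: H lC Cgt; set A := dotv u u; set B := dotv u w; set C := dotv w w.
  move=> H lC Cgt.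
  have := mulr_ge0 (ltW Cgt) H.
  have -> : C * (A - l * B - (l * B - l * (l * C))) = A * C - B ^+ 2.
    by rewrite -lC; ring.
  by rewrite subr_ge0.
have h1 : dotv u w <= `|dotv u w| by exact: ler_norm.
apply: (le_trans h1).
rewrite /norm2 -sqrtrM ?dotv_ge0 // -sqrtr_sqr.
by rewrite ler_sqrt // ?mulr_ge0 ?dotv_ge0.
Qed.

Lemma dgrad (f : vec -> R) x v : 'd f x v = dotv (grad f x) v.
Proof.
rewrite {1}(row_sum_delta v) linear_sum dotvC dotvE.
apply: eq_bigr => j _; rewrite linearZ /= /grad mxE mulrC.
by rewrite mulrC.
Qed.

Lemma diff_sumf n (F : 'I_n -> vec -> R) x : (forall i, differentiable (F i) x) ->
  forall v, 'd (\sum_(i < n) F i) x v = \sum_(i < n) 'd (F i) x v.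
Proof.
elim: n F => [|n IH] F dF v.
  rewrite !big_ord0.
  have -> : (0 : vec -> R) = cst 0 by [].
  by rewrite diff_cst.
rewrite !big_ord_recr /= diffD //=; last exact: differentiable_sum.
by rewrite IH.
Qed.

Lemma avgfE n (fs : 'I_n -> vec -> R) : avgf fs = n%:R^-1 *: \sum_(i < n) fs i.
Proof.
by apply: funext => x; rewrite /avgf /= fct_sumE.
Qed.

Lemma grad_avg n (fs : 'I_n -> vec -> R) x : (forall i, differentiable (fs i) x) ->
  grad (avgf fs) x = n%:R^-1 *: \sum_(i < n) grad (fs i) x.
Proof.
move=> dF; apply/rowP => j.
rewrite /grad avgfE mxE diffZ /=; last exact: differentiable_sum.
rewrite diff_sumf // mxE summxE; congr (_ * _).
by apply: eq_bigr => i _; rewrite mxE.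
Qed.

Lemma line_fun (f : vec -> R) x w t :
  (fun h : R => h^-1 *: (((fun s : R => f (s *: w + x)) \o shift t) (h *: 1) - (fun s : R => f (s *: w + x)) t)) =
  (fun h : R => h^-1 *: ((f \o shift (t *: w + x)) (h *: w) - f (t *: w + x))).
Proof.
apply: funext => h; rewrite /= /shift /=.
by rewrite [h%:A]mulr1 scalerDl addrA.
Qed.

Lemma line_derivable (f : vec -> R) x w t : derivable f (t *: w + x) w ->
  derivable (fun s : R => f (s *: w + x)) t 1.
Proof. by rewrite /derivable line_fun. Qed.

Lemma line_derive (f : vec -> R) x w t :
  derive (fun s : R => f (s *: w + x)) t 1 = derive f (t *: w + x) w.
Proof. by rewrite /derive line_fun. Qed.

Lemma descent (f : vec -> R) L x w : L_smooth L f ->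
  f (w + x) <= f x + dotv (grad f x) w + L / 2 * dotv w w.
Proof.
move=> [df Lip].
set B := dotv (grad f x) w; set C := dotv w w; set K := L / 2 * C.
pose g := fun s : R => f (s *: w + x).
pose h : R -> R := g - B *: (id : R -> R) - K *: ((id : R -> R) ^+ 2).
have hd : forall t : R, is_derive t 1 h ('d f (t *: w + x) w - B *: 1 - K *: ((2%:R * t ^+ 1) *: 1)).
  move=> t.
  have gd : is_derive t 1 g ('d f (t *: w + x) w).
    apply: DeriveDef; first exact/line_derivable/diff_derivable.
    by rewrite line_derive deriveE.
  rewrite /h; apply: is_deriveB; apply: is_deriveZ.
have hdv : forall t : R, derivable h t 1 by move=> t; case: (hd t).
have hle : forall t : R, 0 <= t -> derive1 h t <= 0.
  move=> t t0; rewrite derive1E derive_val dgrad.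
  rewrite [B%:A]mulr1 [(2 * t ^+ 1)%:A]mulr1 /K /B -dotvBl.
  apply: (@le_trans _ _ (norm2 (grad f (t *: w + x) - grad f x) * norm2 w - L / 2 * C * (2 * t ^+ 1))).
    by rewrite lerD2r CS.
  have := Lip (t *: w + x) x; rewrite addrK norm2Z ger0_norm // => HL.
  have := ler_wpM2r (norm2_ge0 w) HL.
  rewrite -!mulrA -expr2 norm2_sq -/C => HL2.
  rewrite subr_le0 (le_trans HL2) //.
  by rewrite expr1 le_eqVlt; apply/orP; left; apply/eqP; field.
have hle' : forall t, t \in `]0, 1[%R -> derive1 h t <= 0.
  by move=> t tin; apply: hle; rewrite ltW // (itvP tin).
have hc : {within `[0, 1], continuous h}.
  by apply: derivable_within_continuous => t _; exact: hdv.
have := @ler0_derive1_le_cc R h 0 1 (fun t _ => hdv t) hle' hc 1 0.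
rewrite !in_itv /= !lexx ler01 => /(_ isT isT isT).
have hE : forall s, h s = f (s *: w + x) - B * s - K * s ^+ 2.
  by move=> s; rewrite /h /g /= !fctE expr2 /= -expr2.
rewrite !hE scale0r scale1r add0r expr1n expr0n /= !mulr0 !mulr1 !subr0 => H.
lra.
Qed.

Lemma norm2D (u v : vec) : norm2 (u + v) <= norm2 u + norm2 v.
Proof.
have h0 : 0 <= norm2 u + norm2 v by rewrite addr_ge0 // norm2_ge0.
rewrite {1}/norm2 -(ger0_norm h0) -sqrtr_sqr ler_sqrt; last by rewrite sqr_ge0.
rewrite !dotvDl !dotvDr (dotvC v u) sqrrD -!norm2_sq.
have := CS u v; lra.
Qed.

Lemma norm2_0 : norm2 (0 : vec) = 0.
Proof. by rewrite /norm2 dotv0l sqrtr0. Qed.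

Lemma norm2_sum n (F : 'I_n -> vec) : norm2 (\sum_(i < n) F i) <= \sum_(i < n) norm2 (F i).
Proof.
elim/big_ind2: _ => //; first by rewrite norm2_0.
by move=> a b c e h1 h2; apply: le_trans (norm2D _ _) _; apply: lerD.
Qed.

Lemma avg_smooth n (fs : 'I_n -> vec -> R) L : (0 < n)%N ->
  (forall i, L_smooth L (fs i)) -> L_smooth L (avgf fs).
Proof.
move=> n0 hs; have dF : forall i x, differentiable (fs i) x by move=> i x; case: (hs i).
split.
  move=> x; rewrite avgfE; apply: differentiableZ; exact: differentiable_sum.
move=> x y; rewrite !grad_avg // -scalerBr -sumrB norm2Z.
have np : 0 < n%:R :> R by rewrite ltr0n.
rewrite ger0_norm; last by rewrite invr_ge0 ltW.
rewrite ler_pdivrMl //.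
apply: le_trans (norm2_sum _) _.
apply: le_trans (_ : \sum_(i < n) L * norm2 (x - y) <= _).
  by apply: ler_sum => i _; case: (hs i) => _ ->.
by rewrite sumr_const card_ord mulr_natl.
Qed.

Lemma inner_step n (fs : 'I_n -> vec -> R) gamma p x0 vs t :
  (inner fs gamma p x0 vs t.+1).1.1.2 =
  (inner fs gamma p x0 vs t).1.1.2 - gamma *: (inner fs gamma p x0 vs t.+1).1.2.
Proof. by rewrite /=; case: (inner fs gamma p x0 vs t) => [[[xp xc] v] tv]. Qed.

Lemma inner_x_sum n (fs : 'I_n -> vec -> R) gamma p x0 vs t :
  (inner fs gamma p x0 vs t).1.1.2 =
  x0 - gamma *: \sum_(k < t.+1) (inner fs gamma p x0 vs k).1.2.
Proof.
elim: t => [|t IH]; first by rewrite big_ord1.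
rewrite inner_step IH [in RHS]big_ord_recr scalerDr opprD addrA.
by [].
Qed.
End S.
Local Close Scope classical_set_scope.
Unset Implicit Arguments.
Set Strict Implicit.

Theorem lemma8 (R : realType) (d n : nat) (fs : 'I_n -> 'rV[R]_d -> R)
  (L gamma : R) (pi : nat -> {perm 'I_n}) (x00 : 'rV[R]_d) :
  (0 < n)%N -> 0 < L ->
  (forall i, L_smooth L (fs i)) ->
  ((exists mu : R, 0 < mu /\ forall i, strongly_convex mu (fs i)) \/
   (exists m : R, forall x, m <= avgf fs x)) ->
  0 < gamma -> gamma <= (L * (n.+1)%:R)^-1 ->
  forall s : nat,
    let f := avgf fs in
    let xs := nfg_x0 fs gamma pi x00 s in
    f (nfg_x0 fs gamma pi x00 s.+1)
      <= f xs - gamma * (n.+1)%:R / 2 * norm2 (grad f xs) ^+ 2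
         + gamma * (n.+1)%:R / 2 *
           norm2 (grad f xs - (n.+1)%:R^-1 *: \sum_(t < n.+1) nfg_v fs gamma pi x00 s t) ^+ 2.
Proof.
move=> n0 L0 hs _ g0 gle s /=.
set f := avgf fs; set xs := nfg_x0 fs gamma pi x00 s.
set S := \sum_(t < n.+1) nfg_v fs gamma pi x00 s t.
have Hx : nfg_x0 fs gamma pi x00 s.+1 = (- gamma) *: S + xs.
  rewrite /S /xs /nfg_x0 /nfg_v /=.
  case: (outer fs gamma pi x00 s) => x vs /=.
  have E := inner_x_sum fs gamma (pi s) x vs n.
  move: E; case: (inner fs gamma (pi s) x vs n) => [[[a b] c] e] /= ->.
  by rewrite /inner_v scaleNr addrC.
have D := descent xs ((- gamma) *: S) (avg_smooth n0 hs).
rewrite Hx; apply: le_trans D _.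
have Npos : 0 < (n.+1)%:R :> R by rewrite ltr0n.
have hLg : L * (n.+1)%:R * gamma <= 1.
  have := ler_wpM2l (ltW (mulr_gt0 L0 Npos)) gle.
  by rewrite mulfV // gt_eqF // mulr_gt0.
rewrite !norm2_sq !dotvBl !dotvBr !dotvZl !dotvZr (dotvC S (grad f xs)).
rewrite -/f.
set A := dotv (grad f xs) (grad f xs); set B := dotv (grad f xs) S; set C := dotv S S.
have C0 : 0 <= C by exact: dotv_ge0.
set N := (n.+1)%:R : R.
rewrite -subr_ge0.
have -> : f xs - gamma * N / 2 * A + gamma * N / 2 * (A - N^-1 * B - (N^-1 * B - N^-1 * (N^-1 * C)))
   - (f xs + - gamma * B + L / 2 * (- gamma * (- gamma * C)))
   = gamma * C / (2 * N) * (1 - L * N * gamma).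
  by field; rewrite gt_eqF.
apply: mulr_ge0; last by rewrite subr_ge0.
apply: divr_ge0; first exact: mulr_ge0 (ltW g0) C0.
by apply: mulr_ge0 => //; exact: ltW.
Qed.
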